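(* Let $\Phi=\forall u_1\ldots\forall u_n\exists e_1(D_1)\ldots\exists e_m(D_m).\varphi$ be a DQBF. If Algorithm 1 (as described in the context), run on $\Phi$, returns FALSE, then $\Phi$ is false; this holds for every admissible choice made during the run.
   Context: For a set $V$ of variables, $[V]$ is the set of assignments $V\to\{\textsc{true},\textsc{false}\}$; assignments are identified with terms of the literals they make true, $\neg\sigma$ is the clause of the negations of these literals, and $\sigma|_W$ denotes restriction. A DQBF is $\Phi=\forall u_1\ldots\forall u_n\exists e_1(D_1)\ldots\exists e_m(D_m).\varphi$ with pairwise distinct variables, $U=\{u_i\}$, $E=\{e_j\}$, dependency sets $D(e_j)=D_j\subseteq U$, $\varphi$ a CNF over $U\cup E$; a model is a family $(f_e)_{e\in E}$, $f_e:[D(e)]\to\{\textsc{true},\textsc{false}\}$, such that for all $\sigma\in[U]$ the assignment $\sigma$ together with $e\mapsto f_e(\sigma|_{D(e)})$ satisfies $\varphi$; $\Phi$ is true iff it has a model, false otherwise. A definition of a variable $x$ by a set $X$ in a formula $\chi$ is a formula $\psi$ with $\mathit{var}(\psi)\subseteq X$ such that every satisfying assignment $\lambda$ of $\chi$ has $\lambda(x)=\psi[\lambda]$. Arbiter variables $e^\sigma$ ($e\in E$, $\sigma\in[D(e)]$) are fresh variables. Algorithm 1. Phase 1: set $A=\emptyset$, $\varphi_A=\emptyset$, $\psi_{\mathit{Def}}=$ empty conjunction. For $i=1,\dots,m$: while $e_i$ has no definition by $A\cup D_i$ in $\varphi\wedge\varphi_A$, choose $\xi\in[D_i\cup A]$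 such that both $\varphi\wedge\varphi_A\wedge\xi\wedge e_i$ and $\varphi\wedge\varphi_A\wedge\xi\wedge\neg e_i$ are satisfiable, let $\sigma=\xi|_{D_i}$, add $e_i^\sigma$ to $A$ and the clauses $(e_i^\sigma\vee\neg\sigma\vee\neg e_i)$, $(\neg e_i^\sigma\vee\neg\sigma\vee e_i)$ to $\varphi_A$. Then choose a definition $\psi^i$ of $e_i$ by $A\cup D_i$ in $\varphi\wedge\varphi_A$ and conjoin $(e_i\leftrightarrow\psi^i)$ to $\psi_{\mathit{Def}}$. Phase 2: let $\tau\in[A]$ set all arbiter variables true, $\mathcal{C}=\emptyset$. Repeat: if $\neg\varphi\wedge\psi_{\mathit{Def}}\wedge\tau$ is unsatisfiable, return TRUE; otherwise choose a satisfying assignment $\sigma$ of it, choose a subset $\rho$ of the literals of $\tau\wedge\sigma|_U$ with $\varphi\wedge\varphi_A\wedge\rho$ unsatisfiable, add the clause $\neg(\rho|_A)$ to $\mathcal{C}$; if $\mathcal{C}$ is satisfiable, let $\tau\in[A]$ satisfy $\mathcal{C}$ and repeat, else return FALSE. *)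

(* Defs.v *)
From mathcomp Require Import all_boot.
Set Implicit Arguments. Unset Strict Implicit. Unset Printing Implicit Defensive.

Definition lit (T : Type) := (T * bool)%type.               (* (x, b): x = b *)
Definition clause (T : Type) := seq (lit T).
Definition cnf (T : Type) := seq (clause T).

Definition lit_true (T : Type) (lam : T -> bool) (l : lit T) := lam l.1 == l.2.
Definition sat_clause (T : Type) (lam : T -> bool) (c : clause T) :=
  has (lit_true lam) c.
Definition sat_cnf (T : Type) (lam : T -> bool) (f : cnf T) :=
  all (sat_clause lam) f.

Inductive form (T : Type) :=
| FVar of T | FTrue | FNot of form T | FAnd of form T & form T | FOr of form T & form T.
Arguments FTrue {T}.

Fixpoint feval (T : Type) (lam : T -> bool) (p : form T) : bool :=
  match p with
  | FVar x => lam x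
  | FTrue => true
  | FNot q => ~~ feval lam q
  | FAnd q r => feval lam q && feval lam r
  | FOr q r => feval lam q || feval lam r
  end.

Fixpoint fvars (T : Type) (p : form T) : seq T :=
  match p with
  | FVar x => [:: x]
  | FTrue => [::]
  | FNot q => fvars q
  | FAnd q r | FOr q r => fvars q ++ fvars r
  end.

Definition is_definition (T : Type) (chi : cnf T) (x : T) (X : pred T) (psi : form T) :=
  all X (fvars psi) /\ forall lam : T -> bool, sat_cnf lam chi -> lam x = feval lam psi.
Definition has_definition (T : Type) (chi : cnf T) (x : T) (X : pred T) :=
  exists psi : form T, is_definition chi x X psi.

Record dqbf (V : finType) := Dqbf {
  dq_U : {set V};
  dq_E : seq V;
  dq_D : V -> {set V};
  dq_phi : cnf V
}.

Definition wf_dqbf (V : finType) (P : dqbf V) :=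
  [/\ uniq (dq_E P),
      [disjoint dq_U P & [pred x | x \in dq_E P]],
      (forall e, e \in dq_E P -> dq_D P e \subset dq_U P) &
      (forall c, c \in dq_phi P -> forall l, l \in c ->
         (l.1 \in dq_U P) || (l.1 \in dq_E P))].

(* A model: for each e in E a function f e of assignments that only depends on
   the values on D(e) (i.e. a function [D(e)] -> bool), such that for every
   universal assignment sigma, sigma extended by e |-> f_e(sigma|_D(e))
   satisfies phi. *)
Definition dqbf_model (V : finType) (P : dqbf V) (f : V -> (V -> bool) -> bool) :=
  (forall e, e \in dq_E P -> forall s s' : V -> bool,
      {in dq_D P e, s =1 s'} -> f e s = f e s') /\
  (forall s : V -> bool,
      sat_cnf (fun x => if x \in dq_E P then f x s else s x) (dq_phi P)).

Definition dqbf_true (V : finType) (P : dqbf V) :=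
  exists f, dqbf_model P f.

(* A partial assignment sigma in [W] is a finite function V -> option bool whose
   domain (where it is Some) is W. Arbiter variable e^sigma is inr (e, sigma). *)
Definition pasg (V : finType) := {ffun V -> option bool}.
Definition xvar (V : finType) := (V + (V * pasg V))%type.

Definition lift_cnf (V : finType) (f : cnf V) : cnf (xvar V) :=
  map (map (fun l : lit V => ((inl l.1 : xvar V), l.2))) f.

Definition neg_pasg (V : finType) (s : pasg V) : clause (xvar V) :=
  pmap (fun v => omap (fun b => ((inl v : xvar V), ~~ b)) (s v)) (enum V).

Definition restr (V : finType) (lam : xvar V -> bool) (W : {set V}) : pasg V :=
  [ffun v => if v \in W then Some (lam (inl v)) else None].

Definition arbiter_clauses (V : finType) (e : V) (s : pasg V) : cnf (xvar V) :=
  [:: ((inr (e, s) : xvar V), true) :: rcons (neg_pasg s) ((inl e : xvar V), false);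
      ((inr (e, s) : xvar V), false) :: rcons (neg_pasg s) ((inl e : xvar V), true)].

Definition DA (V : finType) (P : dqbf V) (e : V) (A : {set xvar V}) : {set xvar V} :=
  [set (inl v : xvar V) | v in dq_D P e] :|: A.

(* chi and xi /\ (e or not e) satisfiable, xi in [X] given by the values of lam0 on X *)
Definition sat_with_term (V : finType) (chi : cnf (xvar V)) (X : {set xvar V})
  (lam0 : xvar V -> bool) (x : xvar V) (b : bool) :=
  exists lam : xvar V -> bool, [/\ sat_cnf lam chi, {in X, lam =1 lam0} & lam x = b].

(* Phase 1, while loop for a fixed e_i : state (A, phi_A) -> final (A, phi_A) *)
Inductive phase1_loop (V : finType) (P : dqbf V) (e : V) :
  {set xvar V} -> cnf (xvar V) -> {set xvar V} -> cnf (xvar V) -> Prop :=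
| P1L_stop A phiA :
    has_definition (lift_cnf (dq_phi P) ++ phiA) (inl e) (mem (DA P e A)) ->
    phase1_loop P e A phiA A phiA
| P1L_step A phiA (xi : xvar V -> bool) A' phiA' :
    ~ has_definition (lift_cnf (dq_phi P) ++ phiA) (inl e) (mem (DA P e A)) ->
    sat_with_term (lift_cnf (dq_phi P) ++ phiA) (DA P e A) xi (inl e) true ->
    sat_with_term (lift_cnf (dq_phi P) ++ phiA) (DA P e A) xi (inl e) false ->
    phase1_loop P e (inr (e, restr xi (dq_D P e)) |: A)
                    (phiA ++ arbiter_clauses e (restr xi (dq_D P e))) A' phiA' ->
    phase1_loop P e A phiA A' phiA'.

(* Phase 1 over the remaining list of existentials; defs collects (e_i, psi^i),
   representing psi_Def = /\_i (e_i <-> psi^i). *)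
Inductive phase1 (V : finType) (P : dqbf V) :
  seq V -> {set xvar V} -> cnf (xvar V) -> seq (V * form (xvar V)) ->
  {set xvar V} -> cnf (xvar V) -> seq (V * form (xvar V)) -> Prop :=
| P1_nil A phiA defs : phase1 P [::] A phiA defs A phiA defs
| P1_cons e es A phiA defs A1 phiA1 psi A2 phiA2 defs2 :
    phase1_loop P e A phiA A1 phiA1 ->
    is_definition (lift_cnf (dq_phi P) ++ phiA1) (inl e) (mem (DA P e A1)) psi ->
    phase1 P es A1 phiA1 (rcons defs (e, psi)) A2 phiA2 defs2 ->
    phase1 P (e :: es) A phiA defs A2 phiA2 defs2.

(* lam satisfies  not phi /\ psi_Def /\ tau  (tau in [A] given by its values on A) *)
Definition sat_phase2 (V : finType) (P : dqbf V) (A : {set xvar V})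
  (defs : seq (V * form (xvar V))) (tau : xvar V -> bool) (lam : xvar V -> bool) :=
  [/\ ~~ sat_cnf lam (lift_cnf (dq_phi P)),
      all (fun d => lam (inl d.1) == feval lam d.2) defs &
      {in A, lam =1 tau}].

(* rho is a set of literals of the term  tau /\ sigma|_U *)
Definition sub_lits (V : finType) (P : dqbf V) (A : {set xvar V})
  (tau lam : xvar V -> bool) (rho : seq (lit (xvar V))) :=
  forall l, l \in rho ->
    (l.1 \in A /\ l.2 = tau l.1) \/
    (exists u, [/\ u \in dq_U P, l.1 = inl u & l.2 = lam (inl u)]).

Definition neg_restrA (V : finType) (A : {set xvar V}) (rho : seq (lit (xvar V)))
  : clause (xvar V) :=
  [seq (l.1, ~~ l.2) | l <- rho & l.1 \in A].

(* Phase 2: from current (tau, C) the run returns the boolean result. *)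
Inductive phase2 (V : finType) (P : dqbf V) (A : {set xvar V}) (phiA : cnf (xvar V))
  (defs : seq (V * form (xvar V))) : (xvar V -> bool) -> cnf (xvar V) -> bool -> Prop :=
| P2_true tau C :
    ~ (exists lam, sat_phase2 P A defs tau lam) ->
    phase2 P A phiA defs tau C true
| P2_false tau C lam rho :
    sat_phase2 P A defs tau lam ->
    sub_lits P A tau lam rho ->
    ~ (exists mu, sat_cnf mu (lift_cnf (dq_phi P) ++ phiA) /\ all (lit_true mu) rho) ->
    ~ (exists mu, sat_cnf mu (rcons C (neg_restrA A rho))) ->
    phase2 P A phiA defs tau C false
| P2_step tau C lam rho tau' r :
    sat_phase2 P A defs tau lam ->
    sub_lits P A tau lam rho ->
    ~ (exists mu, sat_cnf mu (lift_cnf (dq_phi P) ++ phiA) /\ all (lit_true mu) rho) ->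
    sat_cnf tau' (rcons C (neg_restrA A rho)) ->
    phase2 P A phiA defs tau' (rcons C (neg_restrA A rho)) r ->
    phase2 P A phiA defs tau C r.

Definition alg1_returns (V : finType) (P : dqbf V) (r : bool) :=
  exists A phiA defs,
    phase1 P (dq_E P) set0 [::] [::] A phiA defs /\
    phase2 P A phiA defs (fun _ => true) [::] r.

(* Main.v *)
Require Import Defs.
From mathcomp Require Import all_boot.
Set Implicit Arguments. Unset Strict Implicit. Unset Printing Implicit Defensive.

Section S.
Variable V : finType.
Variable P : dqbf V.

Definition Inv (A : {set xvar V}) (phiA : cnf (xvar V)) :=
  (forall x, x \in A -> exists p, x = inr p) /\
  (forall c, c \in phiA -> exists e xi,
     e \in dq_E P /\ c \in arbiter_clauses e (restr xi (dq_D P e))).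

Lemma loop_inv e A phiA A' phiA' :
  phase1_loop P e A phiA A' phiA' -> e \in dq_E P -> Inv A phiA -> Inv A' phiA'.
Proof.
elim=> // {A phiA A' phiA'} A phiA xi A' phiA' _ _ _ _ IH eE [IA IP].
apply: IH => //; split.
- move=> x; rewrite in_setU1 => /orP [/eqP -> | /IA //]; by eexists.
- move=> c; rewrite mem_cat => /orP [/IP // | cin].
  by exists e, xi.
Qed.

Lemma phase1_inv es A phiA defs A2 phiA2 defs2 :
  phase1 P es A phiA defs A2 phiA2 defs2 -> {subset es <= dq_E P} ->
  Inv A phiA -> Inv A2 phiA2.
Proof.
elim=> // {es A phiA defs A2 phiA2 defs2}.
move=> e es A phiA defs A1 phiA1 psi A2 phiA2 defs2 Hl _ _ IH sub I.
apply: IH.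
  by move=> x xin; apply: sub; rewrite in_cons xin orbT.
apply: loop_inv Hl _ I; apply: sub; exact: mem_head.
Qed.

Lemma lift_sat (lam : xvar V -> bool) (f : cnf V) :
  sat_cnf lam (lift_cnf f) = sat_cnf (fun x => lam (inl x)) f.
Proof.
rewrite /sat_cnf /lift_cnf all_map; apply: eq_all => c /=.
by rewrite /sat_clause has_map; apply: eq_has.
Qed.

Lemma sat_cat (lam : xvar V -> bool) (a b : cnf (xvar V)) :
  sat_cnf lam (a ++ b) = sat_cnf lam a && sat_cnf lam b.
Proof. by rewrite /sat_cnf all_cat. Qed.

Variable f : V -> (V -> bool) -> bool.
Hypothesis fdep : forall e, e \in dq_E P -> forall s s' : V -> bool,
      {in dq_D P e, s =1 s'} -> f e s = f e s'.
Hypothesis wf : wf_dqbf P.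

Definition tstar (x : xvar V) : bool :=
  match x with inr p => f p.1 (fun v => odflt false (p.2 v)) | inl _ => false end.

Definition lamM (sg : V -> bool) (x : xvar V) : bool :=
  match x with
  | inl v => if v \in dq_E P then f v sg else sg v
  | inr p => f p.1 (fun v => odflt false (p.2 v)) end.

Lemma notE u : u \in dq_U P -> (u \in dq_E P) = false.
Proof.
case: wf => _ dis _ _ uU.
by have := disjointFr dis uU.
Qed.

Lemma arb_sat sg e xi c : e \in dq_E P ->
  c \in arbiter_clauses e (restr xi (dq_D P e)) -> sat_clause (lamM sg) c.
Proof.
move=> eE cin.
have DU : forall v, v \in dq_D P e -> lamM sg (inl v) = sg v.
  move=> v vD; case: wf => _ _ sub _.
  by rewrite /= notE // (subsetP (sub e eE)).
have [[v [vD neq]] | all_eq] :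
  (exists v, v \in dq_D P e /\ sg v != xi (inl v)) \/
  (forall v, v \in dq_D P e -> sg v = xi (inl v)).
  case: (pickP [pred v | (v \in dq_D P e) && (sg v != xi (inl v))]).
    by move=> v /andP [vD nq]; left; exists v.
  move=> H; right => v vD; have := H v; rewrite /= vD /=.
  by move/negbFE/eqP.
- have lin : ((inl v : xvar V), ~~ xi (inl v)) \in neg_pasg (restr xi (dq_D P e)).
    rewrite /neg_pasg mem_pmap; apply/mapP; exists v; first by rewrite mem_enum.
    by rewrite /restr ffunE vD.
  have lt : lit_true (lamM sg) ((inl v : xvar V), ~~ xi (inl v)).
    rewrite /lit_true /=; move: (DU v vD) => /= ->; move: neq; by case: (sg v); case: (xi (inl v)).
  move: cin; rewrite !in_cons orbF => /orP [] /eqP ->;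
    rewrite /sat_clause /= has_rcons; apply/orP; right; apply/orP; right;
    apply/hasP; by exists ((inl v : xvar V), ~~ xi (inl v)).
- have eq : lamM sg (inr (e, restr xi (dq_D P e))) = lamM sg (inl e).
    rewrite /= eE; apply: fdep => // v vD.
    by rewrite /restr ffunE vD /= all_eq.
  move: cin; rewrite !in_cons orbF => /orP [] /eqP ->;
    move: eq; rewrite /sat_clause /= has_rcons /lit_true /= eE => ->;
    by case: (f e sg).
Qed.

End S.

Theorem theorem2 (V : finType) (P : dqbf V) :
  wf_dqbf P -> alg1_returns P false -> ~ dqbf_true P.
Proof.
move=> wf [A [phiA [defs [H1 H2]]]] [f [fdep fsat]].
have [IA IP] : Inv P A phiA.
  apply: phase1_inv H1 _ _ => //; split => x; by rewrite ?in_set0.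
have key : forall tau lam rho, sub_lits P A tau lam rho ->
   ~ (exists mu, sat_cnf mu (lift_cnf (dq_phi P) ++ phiA) /\ all (lit_true mu) rho) ->
   sat_clause (tstar f) (neg_restrA A rho).
  move=> tau lam rho Hs Hu; apply/negPn/negP => Hn; apply: Hu.
  exists (lamM P f (fun v => lam (inl v))); split.
    rewrite sat_cat lift_sat; apply/andP; split; first exact: fsat.
    apply/allP => c /IP [e [xi [eE cin]]]; exact: arb_sat cin.
  apply/allP => l lr; case: (Hs l lr) => [[lA _] | [u [uU l1 l2]]].
    move: Hn; rewrite /sat_clause => /hasPn Hn.
    have := Hn (l.1, ~~ l.2).
    have -> : (l.1, ~~ l.2) \in neg_restrA A rho.
      rewrite /neg_restrA; apply/mapP; exists l => //; by rewrite mem_filter lA lr.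
    move=> /(_ isT); case: (IA _ lA) => p; case: l {lr lA} => x b /= -> /=.
    by rewrite /lit_true /=; case: b; case: (f _ _).
  by rewrite /lit_true l1 l2 /= notE //.
have Hgen : forall tau C r, phase2 P A phiA defs tau C r -> r = false ->
    sat_cnf (tstar f) C -> False.
  move=> tau C r; elim => // {tau C r}.
  - move=> tau C lam rho _ Hs Hu Hc _ sC; apply: Hc; exists (tstar f).
    move: sC; rewrite /sat_cnf all_rcons => sC; apply/andP; split => //.
    exact: key Hs Hu.
  - move=> tau C lam rho tau' r _ Hs Hu _ _ IH rf sC; apply: IH rf _.
    rewrite /sat_cnf all_rcons; apply/andP; split => //.
    exact: key Hs Hu.
exact: Hgen H2 erefl isT.
Qed.
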